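(* Assume Assumption (I), and let $(L_k,u_k)$ be a sequence generated by Algorithm A. Then $(u_k)$ is bounded in $V$ and $(F'(u_k))$ is bounded in $V^*$.
   Context: Standing assumptions: $\Omega\subset\mathbb R^d$ bounded Lipschitz domain; $V$ real Hilbert space with inner product $\langle\cdot,\cdot\rangle_V$, $V\subset L^2(\Omega)$ with compact and dense embedding; $V^*$ dual. $F:V\to\mathbb R$ weakly lower semicontinuous, bounded below by an affine function, continuously Fréchet differentiable. $\alpha>0$, $\beta>0$, $p\in(0,1)$. Assumption (I): the standing assumptions hold; $F'$ is completely continuous ($u_n\rightharpoonup u$ in $V$ implies $F'(u_n)\to F'(u)$ in $V^*$); and $F':V\to V^*$ is Lipschitz continuous on bounded sets. For $\epsilon>0$, $\psi_\epsilon(t)=\frac p2\frac{t}{\epsilon^{2-p}}+(1-\frac p2)\epsilon^p$ if $t\in[0,\epsilon^2)$, $\psi_\epsilon(t)=t^{p/2}$ if $t\ge\epsilon^2$, $\psi_\epsilon'(t)=\frac p2\min(\epsilon^{p-2},t^{(p-2)/2})$. Algorithm A: choose a monotonically decreasing sequence $\epsilon_k\searrow0$, constants $\gamma>1$, $\tilde L>0$, and $u_0\in V$. Given $u_k$, for $L\ge0$ let problem (Q$_{k,L}$) be $\min_{u\in V} F(u_k)+F'(u_k)(u-u_k)+\frac L2\|u-u_k\|_V^2+\frac\alpha2\|u\|_V^2+\beta\int_\Omega\big[\psi_{\epsilon_k}(u_k^2)+\psi_{\epsilon_k}'(u_k^2)(u^2-u_k^2)\big]dx$ (strongly convex, unique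 minimizer), and let (D$_{k,L}$) be the condition $F(u_{k+1})\le F(u_k)+F'(u_k)(u_{k+1}-u_k)+L\|u_{k+1}-u_k\|_V^2$ for its minimizer $u_{k+1}$. $L_k$ is the smallest $L\in\{0\}\cup\{\tilde L\gamma^l:l\ge0\}$ for which (D$_{k,L}$) holds, and $u_{k+1}$ is the corresponding minimizer; then $k\mapsto k+1$. *)

(* Defs.v *)
From HB Require Import structures.
From mathcomp Require Import all_boot all_order all_algebra.
From mathcomp Require Import all_classical all_reals all_analysis.
Set Implicit Arguments. Unset Strict Implicit. Unset Printing Implicit Defensive.
Import Order.TTheory GRing.Theory Num.Theory.
Import numFieldNormedType.Exports.
Local Open Scope classical_set_scope.
Local Open Scope ring_scope.

Section Defs.
Variable R : realType.

(* [ip] is an inner product on V inducing the norm of V; together with the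
   completeness of V this makes (V, ip) a real Hilbert space. *)
Definition inner_product_inducing_norm (V : normedModType R)
    (ip : V -> V -> R) : Prop :=
  [/\ forall u v, ip u v = ip v u,
      forall (a : R) u v w, ip (a *: u + v) w = a * ip u w + ip v w &
      forall u, ip u u = `|u| ^+ 2].

Definition cont_linear (V : normedModType R) (f : V -> R) : Prop :=
  [/\ forall (a : R) u v, f (a *: u + v) = a * f u + f v & continuous f].

Definition weak_cvg (V : normedModType R) (u_ : nat -> V) (u : V) : Prop :=
  forall f : V -> R, cont_linear f -> (f \o u_) @ \oo --> f u.

Definition weakly_lsc (V : normedModType R) (F : V -> R) : Prop :=
  forall (u_ : nat -> V) (u : V), weak_cvg u_ u ->
    ((F u)%:E <= limn_einf (fun n => (F (u_ n))%:E))%E.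

Definition affine_lower_bound (V : normedModType R) (F : V -> R) : Prop :=
  exists (l : V -> R) (c : R), cont_linear l /\ forall u, l u + c <= F u.

Definition frechet_derivative (V : normedModType R) (F : V -> R)
    (F' : V -> V -> R) : Prop :=
  forall u, differentiable F u /\ forall v, 'd F u v = F' u v.

Definition dual_continuous (V : normedModType R) (F' : V -> V -> R) : Prop :=
  forall u (e : R), 0 < e -> exists2 del : R, 0 < del &
    forall w, `|w - u| < del -> forall v, `|F' w v - F' u v| <= e * `|v|.

Definition completely_continuous (V : normedModType R) (F' : V -> V -> R) : Prop :=
  forall (u_ : nat -> V) (u : V), weak_cvg u_ u ->
    forall e : R, 0 < e -> exists N : nat, forall n, (N <= n)%N ->
      forall v, `|F' (u_ n) v - F' u v| <= e * `|v|.

Definition dual_lipschitz_on_bounded (V : normedModType R) (F' : V -> V -> R) : Prop :=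
  forall r : R, exists K : R, forall u w, `|u| <= r -> `|w| <= r ->
    forall v, `|F' u v - F' w v| <= K * `|u - w| * `|v|.

Section Embedding.
Context d (T : measurableType d) (mu : {measure set T -> \bar R}).

Definition sq_integrable (f : T -> R) : Prop :=
  measurable_fun setT f /\ mu.-integrable setT (fun x => (f x ^+ 2)%:E).

Definition L2dist2 (f g : T -> R) : R := Rintegral mu setT (fun x => (f x - g x) ^+ 2).

Definition compact_dense_embedding (V : normedModType R) (iota : V -> T -> R) : Prop :=
  [/\ forall v, sq_integrable (iota v),
      forall (a : R) u v x, iota (a *: u + v) x = a * iota u x + iota v x &
      forall v, {ae mu, forall x, iota v x = 0} -> v = 0] /\
  [/\ exists C : R, forall v, Rintegral mu setT (fun x => iota v x ^+ 2) <= C * `|v| ^+ 2,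
      (forall v_ : nat -> V, (exists M : R, forall n, `|v_ n| <= M) ->
         exists (phi : nat -> nat) (f : T -> R),
           [/\ forall n, (phi n < phi n.+1)%N, sq_integrable f &
               (fun n => L2dist2 (iota (v_ (phi n))) f) @ \oo --> 0]) &
      forall f, sq_integrable f -> forall e : R, 0 < e ->
        exists v, L2dist2 (iota v) f < e].
End Embedding.

Definition psi (p eps t : R) : R :=
  if t < eps ^+ 2 then p / 2 * t / powR eps (2 - p) + (1 - p / 2) * powR eps p
  else powR t (p / 2).

(* psi'_eps(t) = p/2 min(eps^(p-2), t^((p-2)/2)), t >= 0 (at t = 0 the second
   argument is +oo, so the min is eps^(p-2)) *)
Definition dpsi (p eps t : R) : R :=
  if t < eps ^+ 2 then p / 2 * powR eps (p - 2)
  else p / 2 * powR t ((p - 2) / 2).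

Section AlgoA.
Context d (T : measurableType d) (mu : {measure set T -> \bar R}).
Context (V : normedModType R) (iota : V -> T -> R) (F : V -> R) (F' : V -> V -> R).
Context (alpha beta p : R) (eps : nat -> R).

Definition Qobj (k : nat) (uk : V) (L : R) (u : V) : R :=
  F uk + F' uk (u - uk) + L / 2 * `|u - uk| ^+ 2 + alpha / 2 * `|u| ^+ 2
  + beta * Rintegral mu setT (fun x =>
      psi p (eps k) (iota uk x ^+ 2)
      + dpsi p (eps k) (iota uk x ^+ 2) * (iota u x ^+ 2 - iota uk x ^+ 2)).

Definition is_Q_minimizer (k : nat) (uk : V) (L : R) (u : V) : Prop :=
  forall w, Qobj k uk L u <= Qobj k uk L w.

Definition cond_D (uk : V) (L : R) (unew : V) : Prop :=
  F unew <= F uk + F' uk (unew - uk) + L * `|unew - uk| ^+ 2.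

Definition L_candidate (gamma Ltil L : R) : Prop :=
  L = 0 \/ exists l : nat, L = Ltil * gamma ^+ l.

Definition generated_by_algoA (gamma Ltil : R) (u0 : V)
    (L_ : nat -> R) (u_ : nat -> V) : Prop :=
  u_ 0%N = u0 /\
  forall k : nat,
    [/\ L_candidate gamma Ltil (L_ k),
        is_Q_minimizer k (u_ k) (L_ k) (u_ k.+1),
        cond_D (u_ k) (L_ k) (u_ k.+1) &
        forall L, L_candidate gamma Ltil L -> L < L_ k ->
          forall v, is_Q_minimizer k (u_ k) L v -> ~ cond_D (u_ k) L v].
End AlgoA.

End Defs.

(* Main.v *)
Require Import Defs.
From HB Require Import structures.
From mathcomp Require Import all_boot all_order all_algebra.
From mathcomp Require Import all_classical all_reals all_analysis.
From mathcomp Require Import ring lra measurable_realfun.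
Import Order.TTheory GRing.Theory Num.Theory.
Import numFieldNormedType.Exports.
Local Open Scope classical_set_scope.
Local Open Scope ring_scope.



Section RealFacts.
Variable R : realType.
Implicit Types q a b x t E : R.

Lemma bern q x : 0 < q -> q < 1 -> 0 <= x -> x `^ q <= q * x + (1 - q).
Proof.
move=> q0 q1 x0.
have h := @conjugate_powR R (x `^ q) 1 (q^-1) ((1 - q)^-1) (powR_ge0 _ _) ler01.
rewrite mulr1 -powRrM mulfV ?gt_eqF// powRr1// powR1 invrK invrK in h.
rewrite mul1r in h; rewrite mulrC; apply: h; rewrite ?invr_gt0 ?subr_gt0//.
by rewrite addrC subrK.
Qed.

Lemma ptan q a b : 0 < q -> q < 1 -> 0 < a -> 0 <= b ->
  b `^ q <= a `^ q + q * a `^ (q - 1) * (b - a).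
Proof.
move=> q0 q1 a0 b0.
have ba0 : 0 <= b / a by rewrite divr_ge0 // ltW.
have -> : b = a * (b / a) by rewrite mulrC divfK ?gt_eqF.
rewrite (powRM _ (ltW a0) ba0).
have h := @bern q (b / a) q0 q1 ba0.
have -> : a `^ (q - 1) = a `^ q / a.
  by rewrite -(mulr_powRB1 (ltW a0) q0); field; rewrite gt_eqF.
have aq0 := powR_ge0 a q.
apply: (le_trans (ler_wpM2l aq0 h)).
rewrite le_eqVlt; apply/orP; left; apply/eqP; field; by rewrite gt_eqF.
Qed.

Definition ps q E t := if t < E then q * t * E `^ (q - 1) + (1 - q) * E `^ q
  else t `^ q.
Definition dps q E t := if t < E then q * E `^ (q - 1) else q * t `^ (q - 1).

Lemma powRm1_anti q x y : q < 1 -> 0 < x -> x <= y -> y `^ (q - 1) <= x `^ (q - 1).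
Proof.
move=> q1 x0 xy.
have y0 : 0 < y by apply: lt_le_trans xy.
have -> : q - 1 = - (1 - q) by rewrite opprB.
rewrite !powRN lef_pV2 ?posrE ?powR_gt0//.
apply: ge0_ler_powR => //; rewrite ?nnegrE ?subr_ge0 ?ltW//.
Qed.

Section PS.
Variables (q : R) (q0 : 0 < q) (q1 : q < 1).

Lemma EG E : 0 < E -> E `^ q = E * E `^ (q - 1).
Proof. by move=> E0; rewrite mulr_powRB1 // ltW. Qed.

Lemma ps_tan E a b : 0 < E -> 0 <= a -> 0 <= b ->
  ps q E b <= ps q E a + dps q E a * (b - a).
Proof.
move=> E0 a0 b0; rewrite /ps /dps.
have G0 := powR_gt0 (q - 1) E0.
set G := E `^ (q - 1).
have hE := EG _ E0; rewrite -/G in hE.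
case: ifP => bE; case: ifP => aE.
- by rewrite le_eqVlt; apply/orP; left; apply/eqP; ring.
- have aE' : E <= a by rewrite leNgt aE.
  have a0' : 0 < a by apply: lt_le_trans aE'.
  have H := @ptan q a E q0 q1 a0' (ltW E0).
  have HG := @powRm1_anti q E a q1 E0 aE'.
  rewrite hE in H.
  have qq : 0 <= q * (E - b) * (G - a `^ (q - 1)).
    apply: mulr_ge0; last by rewrite subr_ge0.
    by apply: mulr_ge0; rewrite ?subr_ge0 ltW.
  rewrite hE; nra.
- have H := @ptan q E b q0 q1 E0 b0.
  rewrite hE -/G in H; rewrite hE; lra.
- have aE' : E <= a by rewrite leNgt aE.
  have a0' : 0 < a by apply: lt_le_trans aE'.
  have H := @ptan q a b q0 q1 a0' b0.
  exact: H.
Qed.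

Lemma ps_ge0 E t : 0 < E -> 0 <= t -> 0 <= ps q E t.
Proof.
move=> E0 t0; rewrite /ps; case: ifP => _; last exact: powR_ge0.
have := mulr_ge0 (mulr_ge0 (ltW q0) t0) (powR_ge0 E (q - 1)); have := ltW q1; have := powR_ge0 E q; nra.
Qed.

Lemma ps_mono E' E t : 0 < E' -> E' <= E -> 0 <= t -> ps q E' t <= ps q E t.
Proof.
move=> E'0 E'E t0; have E0 : 0 < E by apply: lt_le_trans E'E.
rewrite /ps.
have G0 := powR_gt0 (q - 1) E0.
have G'0 := powR_gt0 (q - 1) E'0.
have hE := EG _ E0; have hE' := EG _ E'0.
have HG := @powRm1_anti q E' E q1 E'0 E'E.
set G := E `^ (q - 1) in G0 hE HG *.
set G' := E' `^ (q - 1) in G'0 hE' HG *.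
case: ifP => tE'; case: ifP => tE.
- have H := @ptan q E E' q0 q1 E0 (ltW E'0).
  rewrite hE hE' -/G -/G' in H *.
  have qq : 0 <= q * (E' - t) * (G' - G).
    apply: mulr_ge0; last by rewrite subr_ge0.
    by apply: mulr_ge0; rewrite ?subr_ge0 ltW.
  nra.
- by move: tE; rewrite (lt_le_trans tE' E'E).
- have H := @ptan q E t q0 q1 E0 t0.
  rewrite hE -/G in H *; nra.
- by [].
Qed.

Lemma ps_le E t : 0 < E -> 0 <= t -> ps q E t <= E `^ q + 1 + t.
Proof.
move=> E0 t0; rewrite /ps.
have G0 := powR_gt0 (q - 1) E0.
have hE := EG _ E0.
case: ifP => tE.
- rewrite hE.
  have qq : 0 <= q * (E - t) * E `^ (q - 1).
    by apply: mulr_ge0; [apply: mulr_ge0; [exact: ltW|rewrite subr_ge0 ltW]|exact: ltW].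
  nra.
- have H := @bern q t q0 q1 t0.
  have := powR_ge0 E q; have : 0 <= (1 - q) * t by rewrite mulr_ge0 // subr_ge0 ltW. move=> h1 h2; apply: (le_trans H); rewrite mulrBl mul1r in h1. have := q0; lra.
Qed.

Lemma dps_ge0 E t : 0 < E -> 0 <= dps q E t.
Proof.
by move=> E0; rewrite /dps; case: ifP => _; rewrite mulr_ge0 ?powR_ge0 ?ltW.
Qed.

Lemma dps_le E t : 0 < E -> dps q E t <= q * E `^ (q - 1).
Proof.
move=> E0; rewrite /dps; case: ifP => tE //.
apply: ler_wpM2l; first exact: ltW.
apply: powRm1_anti => //.
by rewrite leNgt tE.
Qed.
End PS.
End RealFacts.
Arguments ps {R}. Arguments dps {R}.
Arguments bern {R}.
Arguments ptan {R}.
Arguments powRm1_anti {R}.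
Arguments EG {R}.
Arguments ps_tan {R}.
Arguments ps_ge0 {R}.
Arguments ps_mono {R}.
Arguments ps_le {R}.
Arguments dps_ge0 {R}.
Arguments dps_le {R}.



Lemma pow2E (R : realType) (e r : R) : 0 <= e -> (e ^+ 2) `^ r = e `^ (2 * r).
Proof. by move=> e0; rewrite powRrM -(powR_mulrn _ e0). Qed.

Lemma psiE (R : realType) (p eps t : R) : 0 < eps ->
  psi p eps t = ps (p / 2) (eps ^+ 2) t.
Proof.
move=> e0; rewrite /psi /ps !pow2E ?ltW//.
have -> : 2 * (p / 2 - 1) = - (2 - p) by field.
have -> : 2 * (p / 2) = p by field.
by rewrite powRN.
Qed.

Lemma dpsiE (R : realType) (p eps t : R) : 0 < eps ->
  dpsi p eps t = dps (p / 2) (eps ^+ 2) t.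
Proof.
move=> e0; rewrite /dpsi /dps !pow2E ?ltW//.
have -> : 2 * (p / 2 - 1) = p - 2 by field.
by have -> : (p - 2) / 2 = p / 2 - 1 by field.
Qed.



Section Int.
Context (R : realType) d (T : measurableType d) (mu : {measure set T -> \bar R}).
Hypothesis hmu : (mu setT < +oo)%E.

Definition Int (f : T -> R) := mu.-integrable setT (EFin \o f).

Lemma intD (f g : T -> R) : Int f -> Int g -> Int (fun x => f x + g x).
Proof.
move=> hf hg; have := integrableD measurableT hf hg.
by apply: eq_integrable => // x _ /=; rewrite EFinD.
Qed.

Lemma intZ (k : R) (f : T -> R) : Int f -> Int (fun x => k * f x).
Proof.
move=> hf; have := integrableZl measurableT k hf.
by apply: eq_integrable => // x _ /=; rewrite EFinM.
Qed.

Lemma intC (k : R) : Int (fun _ => k).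
Proof.
apply/integrableP; split; first exact/measurable_EFinP/measurable_cst.
rewrite /= (_ : (fun x => _) = cst (`|k|)%:E); last by apply: funext => x.
by rewrite integral_cst// lte_mul_pinfty.
Qed.

Lemma int_le (f g : T -> R) : measurable_fun setT f -> (forall x, `|f x| <= g x) -> Int g -> Int f.
Proof.
move=> mf fg hg; apply: le_integrable hg => //.
  exact/measurable_EFinP.
move=> x _ /=; rewrite lee_fin (le_trans (fg x))//.
by rewrite ler_norm.
Qed.
End Int.

Lemma ps_meas (R : realType) (q E : R) : measurable_fun setT (ps q E).
Proof.
rewrite /ps; apply: measurable_fun_ifT.
- apply: measurable_fun_ltr => //; exact: measurable_cst.
- apply: measurable_funD; last exact: measurable_cst.
  apply: measurable_funM; last exact: measurable_cst.
  apply: measurable_funM => //; exact: measurable_cst.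
- exact: measurable_powR.
Qed.

Lemma dps_meas (R : realType) (q E : R) : measurable_fun setT (dps q E).
Proof.
rewrite /dps; apply: measurable_fun_ifT.
- apply: measurable_fun_ltr => //; exact: measurable_cst.
- exact: measurable_cst.
- apply: measurable_funM; first exact: measurable_cst.
  exact: measurable_powR.
Qed.
Arguments Int {R d T}.
Arguments ps_meas {R}. Arguments dps_meas {R}.



Section Main.
Context (R : realType) (d : measure_display) (T : measurableType d)
  (mu : {measure set T -> \bar R}) (hmu : (mu setT < +oo)%E)
  (V : normedModType R) (iota : V -> T -> R)
  (hlin : forall (a : R) u v x, iota (a *: u + v) x = a * iota u x + iota v x)
  (hsq : forall v, sq_integrable mu (iota v)).

Lemma iota0 x : iota 0 x = 0.
Proof.
have := hlin (-1) 0 0 x; rewrite scaler0 addr0 mulN1r addNr; exact.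
Qed.

Lemma iotaZ a u x : iota (a *: u) x = a * iota u x.
Proof. by have := hlin a u 0 x; rewrite addr0 iota0 addr0. Qed.

Lemma iotaD u v x : iota (u + v) x = iota u x + iota v x.
Proof. by have := hlin 1 u v x; rewrite scale1r mul1r. Qed.

Lemma meas_a u : measurable_fun setT (fun x => iota u x ^+ 2).
Proof. by apply: measurable_funX; case: (hsq u). Qed.

Lemma int_a u : Int mu (fun x => iota u x ^+ 2).
Proof. by case: (hsq u). Qed.

Section IntPS.
Variables (q E : R) (q0 : 0 < q) (q1 : q < 1) (E0 : 0 < E).

Lemma int_ps u : Int mu (fun x => ps q E (iota u x ^+ 2)).
Proof.
apply: (@int_le _ _ _ mu _ (fun x => (E `^ q + 1) + iota u x ^+ 2)).
- apply: (measurableT_comp (ps_meas q E)); exact: meas_a.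
- move=> x; rewrite ger0_norm ?ps_ge0 ?sqr_ge0//.
  exact: (ps_le q q0 q1 E _ E0 (sqr_ge0 _)).
- apply: intD; [exact: (@intC _ _ _ mu hmu) | exact: int_a].
Qed.

Lemma int_h u w : Int mu (fun x => ps q E (iota u x ^+ 2)
   + dps q E (iota u x ^+ 2) * (iota w x ^+ 2 - iota u x ^+ 2)).
Proof.
apply: intD; first exact: int_ps.
apply: (@int_le _ _ _ mu _ (fun x => (q * E `^ (q - 1)) * (iota w x ^+ 2 + iota u x ^+ 2))).
- apply: measurable_funM; first by apply: (measurableT_comp (dps_meas q E)); exact: meas_a.
  exact: measurable_funB (meas_a w) (meas_a u).
- move=> x; rewrite normrM ger0_norm ?dps_ge0//.
  apply: ler_pM; rewrite ?dps_ge0 ?dps_le//.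
  rewrite (le_trans (ler_normB _ _))// !ger0_norm ?sqr_ge0//.
- apply: intZ; apply: intD; exact: int_a.
Qed.
End IntPS.

Lemma alg1 (Q1 Q0 c t : R) : 0 < t -> t < 1 ->
  Q1 <= (1 - t) * Q0 + t * (Q1 - c) + t ^+ 2 * c -> Q1 <= Q0 - t * c.
Proof.
move=> t0 t1 H.
have H2 : (1 - t) * (Q1 - (Q0 - t * c)) <= 0 by rewrite expr2 in H; lra.
by rewrite pmulr_rle0 ?subr_gt0 // subr_le0 in H2.
Qed.

Lemma alg2 (Q1 Q0 c : R) : 0 <= c ->
  (forall t, 0 < t -> t < 1 -> Q1 <= Q0 - t * c) -> Q1 + c <= Q0.
Proof.
move=> c0 H; apply/ler_addgt0Pr => e e0.
have [->|cpos] := eqVneq c 0.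
  have h2 : (0:R) < 1/2 by rewrite divr_gt0. 
  have h3 : (1:R)/2 < 1 by rewrite ltr_pdivrMr // mul1r ltr1n.
  have := H _ h2 h3; lra.
have cp : 0 < c by rewrite lt_def cpos.
have ce : 0 < c + e by rewrite addr_gt0.
have t0 : 0 < c / (c + e) by rewrite divr_gt0.
have t1 : c / (c + e) < 1 by rewrite ltr_pdivrMr // mul1r ltrDl.
have := H _ t0 t1.
have key : c / (c + e) * c = c - e + e ^+ 2 / (c + e) by field; rewrite gt_eqF.
have : 0 <= e ^+ 2 / (c + e) by rewrite divr_ge0 ?sqr_ge0 // ltW.
rewrite key; lra.
Qed.

Variables (F : V -> R) (F' : V -> V -> R) (hF' : frechet_derivative F F').

Lemma F'lin u a v w : F' u (a *: v + w) = a * F' u v + F' u w.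
Proof. by have [_ h] := hF' u; rewrite -!h linearP. Qed.

Lemma F'0 u : F' u 0 = 0.
Proof. by have := F'lin u (-1) 0 0; rewrite scaler0 addr0 mulN1r addNr. Qed.

Lemma F'Z u a v : F' u (a *: v) = a * F' u v.
Proof. by have := F'lin u a v 0; rewrite addr0 F'0 addr0. Qed.

Variables (alpha beta p : R) (eps : nat -> R).

Definition Ek k := eps k ^+ 2.
Definition Ih k (u w : V) := Rintegral mu setT (fun x => ps (p / 2) (Ek k) (iota u x ^+ 2)
   + dps (p / 2) (Ek k) (iota u x ^+ 2) * (iota w x ^+ 2 - iota u x ^+ 2)).
Definition Pk k (u : V) := Rintegral mu setT (fun x => ps (p / 2) (Ek k) (iota u x ^+ 2)).
Definition Jk k u := F u + alpha / 2 * `|u| ^+ 2 + beta * Pk k u.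

Hypothesis (heps0 : forall k, 0 < eps k).

Lemma QobjE k uk L w : Qobj mu iota F F' alpha beta p eps k uk L w =
  F uk + F' uk (w - uk) + L / 2 * `|w - uk| ^+ 2 + alpha / 2 * `|w| ^+ 2
  + beta * Ih k uk w.
Proof.
rewrite /Qobj /Ih; congr (_ + _ * _); apply: eq_Rintegral => x _.
by rewrite psiE ?dpsiE.
Qed.

Lemma Ih_self k u : Ih k u u = Pk k u.
Proof. by apply: eq_Rintegral => x _; rewrite subrr mulr0 addr0. Qed.


Hypotheses (halpha : 0 < alpha) (hbeta : 0 < beta) (hp0 : 0 < p) (hp1 : p < 1).

Lemma q0 : 0 < p / 2. Proof. by rewrite divr_gt0. Qed.
Lemma q1 : p / 2 < 1. Proof. by rewrite ltr_pdivrMr // mul1r (lt_trans hp1) // ltr1n. Qed.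
Lemma Ek0 k : 0 < Ek k. Proof. by rewrite /Ek exprn_gt0. Qed.

Lemma Ih_conv k u0 u1 t : 0 < t -> t < 1 ->
  Ih k u0 ((1 - t) *: u0 + t *: u1) <= (1 - t) * Pk k u0 + t * Ih k u0 u1.
Proof.
move=> t0 t1; rewrite /Ih /Pk.
have i0 := int_ps (p / 2) (Ek k) q0 q1 (Ek0 k) u0.
have i1 := int_h (p / 2) (Ek k) q0 q1 (Ek0 k) u0 u1.
rewrite -RintegralZl // -RintegralZl // -RintegralD //; last 2 first.
- exact: intZ.
- exact: intZ.
apply: le_Rintegral => //.
- exact: (int_h (p / 2) (Ek k) q0 q1 (Ek0 k)).
- by apply: intD; apply: intZ.
move=> x _ /=.
rewrite iotaD !iotaZ.
set A := iota u0 x; set B := iota u1 x.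
set P := ps _ _ _; set G := dps _ _ _.
have G0 : 0 <= G by rewrite /G; apply: dps_ge0 (Ek0 k); exact: q0.
have hc : ((1 - t) * A + t * B) ^+ 2 <= (1 - t) * A ^+ 2 + t * B ^+ 2.
  have : 0 <= t * (1 - t) * (A - B) ^+ 2.
    by rewrite mulr_ge0 ?sqr_ge0 // mulr_ge0 ?subr_ge0 ?ltW.
  rewrite !expr2; lra.
have := ler_wpM2l G0 hc.
lra.
Qed.

Lemma step1 k u0 u1 L : 0 <= L ->
  is_Q_minimizer mu iota F F' alpha beta p eps k u0 L u1 ->
  Qobj mu iota F F' alpha beta p eps k u0 L u1 + L / 2 * `|u1 - u0| ^+ 2
  <= Jk k u0.
Proof.
move=> L0 hmin.
apply: alg2; first by rewrite mulr_ge0 ?sqr_ge0 // divr_ge0.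
move=> t t0 t1; apply: alg1 => //.
set w := (1 - t) *: u0 + t *: u1.
apply: (le_trans (hmin w)).
have ew : w - u0 = t *: (u1 - u0).
  by rewrite /w scalerBl scale1r scalerBr addrAC [u0 - _ - u0]addrAC subrr add0r addrC.
rewrite !QobjE ew F'Z normrZ (ger0_norm (ltW t0)) /Jk.
have hN : `|w| ^+ 2 <= (1 - t) * `|u0| ^+ 2 + t * `|u1| ^+ 2.
  have hw : `|w| <= (1 - t) * `|u0| + t * `|u1|.
    by rewrite /w (le_trans (ler_normD _ _)) // !normrZ (ger0_norm (ltW t0)) ger0_norm // subr_ge0 ltW.
  have nw := normr_ge0 w.
  have : 0 <= t * (1 - t) * (`|u0| - `|u1|) ^+ 2.
    by rewrite mulr_ge0 ?sqr_ge0 // mulr_ge0 ?subr_ge0 ?ltW.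
  have hw2 := ler_pM nw nw hw hw.
  rewrite !expr2 in hw2 *; lra.
have hI := @Ih_conv k u0 u1 t t0 t1.
have ha : alpha / 2 * `|w| ^+ 2 <= alpha / 2 * ((1 - t) * `|u0| ^+ 2 + t * `|u1| ^+ 2).
  by rewrite ler_wpM2l // divr_ge0 // ltW.
have hb : beta * Ih k u0 w <= beta * ((1 - t) * Pk k u0 + t * Ih k u0 u1).
  by rewrite ler_wpM2l // ltW.
rewrite /w in ha hb; rewrite !expr2 in ha hb *.
lra.
Qed.

Lemma Pk_le_Ih k u0 u1 : Pk k u1 <= Ih k u0 u1.
Proof.
apply: le_Rintegral => //.
- exact: (int_ps (p / 2) (Ek k) q0 q1 (Ek0 k)).
- exact: (int_h (p / 2) (Ek k) q0 q1 (Ek0 k)).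
move=> x _; apply: ps_tan (Ek0 k) _ _; rewrite ?sqr_ge0 //; [exact: q0 | exact: q1].
Qed.

Lemma step2 k u0 u1 L : cond_D F F' u0 L u1 ->
  Jk k u1 <= Qobj mu iota F F' alpha beta p eps k u0 L u1 + L / 2 * `|u1 - u0| ^+ 2.
Proof.
move=> hD; rewrite QobjE /Jk; rewrite /cond_D in hD.
have := Pk_le_Ih k u0 u1 => hP.
have hb : beta * Pk k u1 <= beta * Ih k u0 u1 by rewrite ler_wpM2l // ltW.
lra.
Qed.

Hypothesis hepsmon : forall k, eps k.+1 <= eps k.

Lemma step3 k u : Jk k.+1 u <= Jk k u.
Proof.
rewrite /Jk; apply: lerD => //; apply: ler_wpM2l; first exact: ltW.
apply: le_Rintegral => //.
- exact: (int_ps (p / 2) (Ek k.+1) q0 q1 (Ek0 k.+1)).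
- exact: (int_ps (p / 2) (Ek k) q0 q1 (Ek0 k)).
move=> x _; apply: ps_mono (Ek0 k.+1) _ _; rewrite ?sqr_ge0 //; try exact: q0; try exact: q1.
rewrite /Ek; have := heps0 k.+1; have := hepsmon k; move=> h1 h2.
by rewrite ler_pM // ltW.
Qed.

Variables (gamma Ltil : R) (hgamma : 1 < gamma) (hLtil : 0 < Ltil) (u0 : V)
  (L_ : nat -> R) (u_ : nat -> V)
  (hgen : generated_by_algoA mu iota F F' alpha beta p eps gamma Ltil u0 L_ u_).

Lemma energy k : Jk k (u_ k) <= Jk 0 (u_ 0).
Proof.
elim: k => [//|k IH]; apply: le_trans IH.
apply: (le_trans (step3 k (u_ k.+1))).
case: hgen => _ /(_ k) [hc hmin hD _].
have L0 : 0 <= L_ k.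
  case: hc => [->//|[l ->]]; rewrite mulr_ge0 ?exprn_ge0 // ltW //.
  exact: lt_trans hgamma.
apply: (le_trans (@step2 k _ _ _ hD)); exact: (@step1 k _ _ _ L0 hmin).
Qed.

Lemma Pk_ge0 k u : 0 <= Pk k u.
Proof.
apply: Rintegral_ge0 => x _; apply: ps_ge0 (Ek0 k) _; rewrite ?sqr_ge0 //;
  [exact: q0 | exact: q1].
Qed.

Lemma energy_lb k : F (u_ k) + alpha / 2 * `|u_ k| ^+ 2 <= Jk 0 (u_ 0).
Proof.
apply: le_trans (energy k); rewrite /Jk lerDl.
by rewrite mulr_ge0 ?Pk_ge0 // ltW.
Qed.
End Main.



Lemma cl_bound (R : realType) (V : normedModType R) (f : V -> R) :
  cont_linear f -> exists K, 0 <= K /\ forall u, `|f u| <= K * `|u|.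
Proof.
case=> hl hc.
have f0 : f 0 = 0.
  by have := hl (-1) 0 0; rewrite scaler0 addr0 mulN1r addNr.
have fZ a u : f (a *: u) = a * f u.
  by have := hl a u 0; rewrite addr0 f0 addr0.
move: (hc 0) => /cvgrPdist_lt /(_ 1 ltr01); rewrite f0.
move/nbhs_norm0P => [e /= e0 he].
exists (2 / e); split; first by rewrite divr_ge0 // ltW.
move=> u; have [->|u0] := eqVneq u 0; first by rewrite f0 !normr0 mulr0.
have nu : 0 < `|u| by rewrite normr_gt0.
set c := e / (2 * `|u|).
have c0 : 0 < c by rewrite divr_gt0 // mulr_gt0.
have := he (c *: u); rewrite /= normrZ gtr0_norm // fZ sub0r normrN normrM gtr0_norm //.
have hcu : c * `|u| < e.
  rewrite /c mulrC mulrA -(mulrC `|u|) -mulf_div divff ?gt_eqF // mul1r.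
  by rewrite ltr_pdivrMr // ltr_pMr // ltr1n.
move=> /(_ hcu) h.
have : `|f u| < 1 / c by rewrite ltr_pdivlMr // mulrC.
move/ltW/le_trans; apply.
rewrite /c le_eqVlt; apply/orP; left; apply/eqP; field.
by rewrite gt_eqF //; rewrite gt_eqF.
Qed.

Theorem lemma7p4
  (R : realType)
  (d : measure_display) (T : measurableType d) (mu : {measure set T -> \bar R})
  (hmu : (mu setT < +oo)%E)
  (V : completeNormedModType R) (ip : V -> V -> R)
  (hip : inner_product_inducing_norm ip)
  (iota : V -> T -> R) (hiota : compact_dense_embedding mu iota)
  (F : V -> R) (F' : V -> V -> R)
  (hFwlsc : weakly_lsc F) (hFaff : affine_lower_bound F)
  (hF' : frechet_derivative F F') (hF'cont : dual_continuous F')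
  (hF'cc : completely_continuous F') (hF'lip : dual_lipschitz_on_bounded F')
  (alpha beta p : R) (halpha : 0 < alpha) (hbeta : 0 < beta)
  (hp0 : 0 < p) (hp1 : p < 1)
  (eps : nat -> R) (heps0 : forall k, 0 < eps k)
  (hepsmon : forall k, eps k.+1 <= eps k) (hepscvg : eps @ \oo --> 0)
  (gamma Ltil : R) (hgamma : 1 < gamma) (hLtil : 0 < Ltil) (u0 : V)
  (L_ : nat -> R) (u_ : nat -> V)
  (hgen : generated_by_algoA mu iota F F' alpha beta p eps gamma Ltil u0 L_ u_) :
  (exists M : R, forall k, `|u_ k| <= M) /\
  (exists M : R, forall k (v : V), `|F' (u_ k) v| <= M * `|v|).
Proof.
case: hiota => -[hsq hlin _] _.
have hE := @energy_lb R d T mu hmu V iota hlin hsq F F' hF' alpha beta p eps heps0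
  halpha hbeta hp0 hp1 hepsmon gamma Ltil hgamma hLtil u0 L_ u_ hgen.
have [C0 {}hE] : exists C0, forall k, F (u_ k) + alpha / 2 * `|u_ k| ^+ 2 <= C0.
  by eexists; exact: hE.
case: hFaff => l [c [hl hlc]].
case: (@cl_bound _ _ _ hl) => K [K0 hK].
set X := C0 - c.
set M := (alpha ^+ 2 + 4 * alpha * X + 4 * K ^+ 2) / alpha ^+ 2.
have hM : forall k, `|u_ k| <= M.
  move=> k; set r := `|u_ k|.
  have r0 : 0 <= r := normr_ge0 _.
  have hlk := hlc (u_ k); have hKk := hK (u_ k); have hEk := hE k.
  have hl2 : - (K * r) <= l (u_ k).
    by rewrite lerNl (le_trans _ hKk) // -normrN ler_norm.
  have h1 : alpha * r ^+ 2 <= 2 * X + 2 * K * r by rewrite /X -/r in hEk *; lra.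
  have h2 : 0 <= (alpha * r - 2 * K) ^+ 2 := sqr_ge0 _.
  have h3 : alpha * (alpha * r ^+ 2) <= alpha * (2 * X + 2 * K * r).
    by rewrite ler_wpM2l // ltW.
  have h4 : r <= 1 + r ^+ 2 by rewrite expr2; nra.
  have a2 : 0 < alpha ^+ 2 by rewrite exprn_gt0.
  rewrite /M ler_pdivlMr //.
  have h5 : alpha ^+ 2 * r <= alpha ^+ 2 * (1 + r ^+ 2) by rewrite ler_wpM2l // ltW.
  rewrite !expr2 in h2 h3 h4 h5 *; nra.
split; first by exists M.
have M0 : 0 <= M by apply: le_trans (hM 0%N); exact: normr_ge0.
case: (hF'lip M) => K' hK'.
have hcl0 : cont_linear (F' 0).
  have [hd hdv] := hF' 0.
  have -> : F' 0 = 'd F 0 by apply: funext => v; rewrite hdv.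
  split; last exact: diff_continuous.
  by move=> a u v; rewrite linearP.
case: (@cl_bound _ _ _ hcl0) => K0' [K0'0 hK0'].
exists (`|K'| * M + K0') => k v.
have n0 : `|(0 : V)| <= M by rewrite normr0.
have h := hK' (u_ k) 0 (hM k) n0 v.
rewrite subr0 in h.
have hv := normr_ge0 v; have hu := normr_ge0 (u_ k).
have e1 : `|F' (u_ k) v| <= `|F' (u_ k) v - F' 0 v| + `|F' 0 v|.
  by rewrite -[X in `|X|](subrK (F' 0 v)) ler_normD.
have e2 : K' * `|u_ k| * `|v| <= `|K'| * M * `|v|.
  rewrite ler_wpM2r //; apply: (le_trans (ler_wpM2r hu (ler_norm K'))).
  by rewrite ler_wpM2l // (hM k).
have := hK0' v; lra.
Qed.
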